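(* Let $m=2\ell$ be an even positive integer, and let $C^{(m)}=(c_{ij})$ be the $m\times m$ coloring matrix with $c_{ij}=1$ if $i+j\le m+1$, except that $c_{ij}=0$ when $i+j=m$ and both $i,j$ are odd; and $c_{ij}=0$ if $i+j>m+1$. Then for every $n\ge1$, $$t_{C^{(m)}}(n)=\frac{\ell}{n}\cdot2^{2n-1}\binom{\frac{\ell+1}{2}n-\frac{\ell}{2}-1}{n-1}.$$
   Context: A plane tree is an unlabeled rooted tree in which the children of every vertex are linearly ordered. A coloring matrix is an $m\times m$ matrix $A=(a_{ij})$ with entries in $\{0,1\}$. An $A$-coloring of a plane tree assigns to each vertex a color in $\{1,\dots,m\}$ such that whenever a vertex of color $j$ is a child of a vertex of color $i$, $a_{ij}=1$. Let $t_A(n)$ be the number of pairs (plane tree with $n$ vertices, $A$-coloring of it). For real $y$ and integer $k\ge0$, $\binom{y}{k}=y(y-1)\cdots(y-k+1)/k!$. *)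

(* Defs.v *)
From HB Require Import structures.
From mathcomp Require Import all_boot all_order all_algebra.
Set Implicit Arguments. Unset Strict Implicit. Unset Printing Implicit Defensive.
Import Order.TTheory GRing.Theory Num.Theory.

(* Colored plane trees: a vertex carries a color (a natural number, the
   meaningful colors being 1..m) and an ordered list of children.
   A colored plane tree is exactly a pair (plane tree, coloring of it). *)
Inductive ctree : Type := CNode of nat & seq ctree.

Fixpoint ctree_enc (t : ctree) : GenTree.tree nat :=
  match t with CNode c cs => GenTree.Node c (map ctree_enc cs) end.

Fixpoint ctree_dec (t : GenTree.tree nat) : ctree :=
  match t with
  | GenTree.Leaf _ => CNode 0 [::]
  | GenTree.Node c ts => CNode c (map ctree_dec ts)
  end.

Fixpoint ctree_encK (t : ctree) : ctree_dec (ctree_enc t) = t :=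
  match t with
  | CNode c cs => f_equal (CNode c)
      ((fix F (l : seq ctree) : map ctree_dec (map ctree_enc l) = l :=
          match l with
          | [::] => erefl
          | x :: l' => f_equal2 cons (ctree_encK x) (F l')
          end) cs)
  end.

Definition ctree_encK' : cancel ctree_enc ctree_dec := ctree_encK.
HB.instance Definition _ := Countable.copy ctree (can_type ctree_encK').

Fixpoint csize (t : ctree) : nat :=
  match t with CNode _ cs => (sumn (map csize cs)).+1 end.

Definition ccolor (t : ctree) : nat := let: CNode c _ := t in c.

Fixpoint cvalid (m : nat) (A : nat -> nat -> bool) (t : ctree) : bool :=
  match t with
  | CNode i cs =>
      (0 < i <= m)%N && all (fun u => A i (ccolor u) && cvalid m A u) cs
  end.

(* N = t_A(n): N is the number of pairs (plane tree with n vertices,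
   A-coloring of it), i.e. of A-colored plane trees with n vertices. *)
Definition is_tA (m : nat) (A : nat -> nat -> bool) (n N : nat) : Prop :=
  exists s : seq ctree,
    [/\ uniq s,
        forall t, (t \in s) = cvalid m A t && (csize t == n)
      & size s = N].

(* The coloring matrix C^(m) (1-based indices). *)
Definition Cmat (m : nat) (i j : nat) : bool :=
  ((i + j <= m.+1)%N) && ~~ [&& i + j == m, odd i & odd j].

Definition binomr (y : rat) (k : nat) : rat :=
  (\prod_(i < k) (y - i%:R)) / (k`!)%:R.

(* Main.v *)
Require Import Defs.
From HB Require Import structures.
From mathcomp Require Import all_boot all_order all_algebra.
From mathcomp Require Import ring lra zify.
Import Order.TTheory GRing.Theory Num.Theory.
Set Implicit Arguments. Unset Strict Implicit. Unset Printing Implicit Defensive.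
Local Open Scope ring_scope.


Definition Aa (t : rat) (n : nat) (a : rat) : rat :=
  if n is n'.+1 then a / n%:R * binomr (a + t * n%:R - 1) n' else 1.

Lemma Aa_diff t n a : Aa t n.+1 (a+1) - Aa t n.+1 a = Aa t n (a + t).
Proof.
case: n => [|n].
  rewrite /= /binomr !big_ord0 /= fact0 !divr1; ring.
rewrite /Aa /binomr.
rewrite [X in (_ * (X / _)) - _ = _]big_ord_recl [X in _ - (_ * (X / _)) = _]big_ord_recr /=.
have E1 : \prod_(i < n) (a + 1 + t * n.+2%:R - 1 - (bump 0 i)%:R) = \prod_(i < n) (a + t * n.+2%:R - 1 - i%:R).
  by apply: eq_bigr => i _; rewrite /bump leq0n add1n -natr1; ring.
have E2 : \prod_(i < n) (a + t + t * n.+1%:R - 1 - i%:R) = \prod_(i < n) (a + t * n.+2%:R - 1 - i%:R).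
  by apply: eq_bigr => i _; rewrite -[n.+2%:R]natr1 -[n.+1%:R]natr1; ring.
rewrite E1 E2; set Q := \prod_(i < n) _.
rewrite !factS !natrM.
have h1 : (n`!)%:R != 0 :> rat by rewrite pnatr_eq0 -lt0n fact_gt0.
have h2 : n.+1%:R != 0 :> rat by rewrite pnatr_eq0.
have h3 : n.+2%:R != 0 :> rat by rewrite pnatr_eq0.
rewrite -[n.+2%:R]natr1 -[n.+1%:R]natr1 in h2 h3 *.
field; rewrite ?h1 ?h2 ?h3 //.
Qed.


Definition isPolyF (f : rat -> rat) := exists p : {poly rat}, forall a, f a = p.[a].

Lemma polyF_const c : isPolyF (fun _ => c).
Proof. by exists c%:P => a; rewrite hornerC. Qed.

Lemma polyF_id : isPolyF (fun a => a).
Proof. by exists 'X => a; rewrite hornerX. Qed.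

Lemma polyF_add f g : isPolyF f -> isPolyF g -> isPolyF (fun a => f a + g a).
Proof. by move=> [p hp] [q hq]; exists (p + q) => a; rewrite hornerD hp hq. Qed.

Lemma polyF_opp f : isPolyF f -> isPolyF (fun a => - f a).
Proof. by move=> [p hp]; exists (- p) => a; rewrite hornerN hp. Qed.

Lemma polyF_mul f g : isPolyF f -> isPolyF g -> isPolyF (fun a => f a * g a).
Proof. by move=> [p hp] [q hq]; exists (p * q) => a; rewrite hornerM hp hq. Qed.

Lemma polyF_shift f b : isPolyF f -> isPolyF (fun a => f (a + b)).
Proof.
move=> [p hp]; exists (p \Po ('X + b%:P)) => a.
by rewrite horner_comp hornerD hornerX hornerC hp.
Qed.

Lemma polyF_sum n (F : nat -> rat -> rat) :
  (forall k, isPolyF (F k)) -> isPolyF (fun a => \sum_(k < n) F k a).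
Proof.
move=> hF; elim: n => [|n IH].
  by exists 0 => a; rewrite big_ord0 horner0.
have := polyF_add IH (hF n); apply: (fun h => _) => -[p hp]; exists p => a.
by rewrite big_ord_recr /= hp.
Qed.

Lemma polyF_prod n (F : nat -> rat -> rat) :
  (forall k, isPolyF (F k)) -> isPolyF (fun a => \prod_(k < n) F k a).
Proof.
move=> hF; elim: n => [|n IH].
  by exists 1 => a; rewrite big_ord0 hornerC.
have := polyF_mul IH (hF n); apply: (fun h => _) => -[p hp]; exists p => a.
by rewrite big_ord_recr /= hp.
Qed.

Lemma polyF_ext f g : isPolyF f -> (forall a, g a = f a) -> isPolyF g.
Proof. by move=> [p hp] e; exists p => a; rewrite e hp. Qed.

Lemma polyF_Aa t n : isPolyF (Aa t n).
Proof.
case: n => [|n]; first exact: polyF_const.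
apply: (@polyF_ext (fun a => a * ((n.+1%:R)^-1 * ((n`!)%:R)^-1) *
    \prod_(k < n) (a + (t * n.+1%:R - 1 - k%:R)))).
  apply: (polyF_mul (f := fun a => a * ((n.+1%:R)^-1 * ((n`!)%:R)^-1))
                    (g := fun a => \prod_(k < n) (a + (t * n.+1%:R - 1 - k%:R)))).
    exact: (polyF_mul polyF_id (polyF_const _)).
  apply: (@polyF_prod n (fun k a => a + (t * n.+1%:R - 1 - k%:R))) => k.
  exact: (polyF_add polyF_id (polyF_const _)).
move=> a; rewrite /= /binomr.
have -> : \prod_(i < n) (a + t * n.+1%:R - 1 - i%:R) =
          \prod_(k < n) (a + (t * n.+1%:R - 1 - k%:R)).
  by apply: eq_bigr => i _; ring.
rewrite /=; ring.
Qed.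

Lemma polyF_zero f : isPolyF f -> (forall i : nat, f i%:R = 0) -> forall a, f a = 0.
Proof.
move=> [p hp] h0.
suff pz : p = 0 by move=> a; rewrite hp pz horner0.
apply/eqP; apply/negPn/negP => pn0.
have H := @max_poly_roots _ p [seq i%:R | i <- iota 0 (size p)] pn0.
rewrite size_map size_iota ltnn in H.
suff : false by []. apply: H.
  by apply/allP => x /mapP [i _ ->]; rewrite /root -hp h0.
rewrite map_inj_uniq ?iota_uniq //.
by move=> i j /eqP; rewrite eqr_nat => /eqP.
Qed.

Lemma Aa0 t k : Aa t k 0 = (k == 0%N)%:R.
Proof. by case: k => [|k] //=; rewrite !mul0r. Qed.

Definition RHF t n b a :=
  \sum_(k < n.+1) Aa t k a * Aa t (n - k) b - Aa t n (a + b).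

Lemma RHF_step t n b a : RHF t n.+1 b (a + 1) - RHF t n.+1 b a = RHF t n b (a + t).
Proof.
rewrite /RHF.
have -> : a + 1 + b = (a + b) + 1 by ring.
have -> : a + t + b = (a + b) + t by ring.
rewrite -(Aa_diff t n (a + b)).
set S1 := \sum_(k < n.+2) _; set S2 := \sum_(k < n.+2) _.
suff h : S1 - S2 = \sum_(k < n.+1) Aa t k (a + t) * Aa t (n - k) b.
  by rewrite -h; ring.
rewrite /S1 /S2 -sumrB big_ord_recl /= subrr add0r.
apply: eq_bigr => i _.
by rewrite /bump leq0n add1n subSS -mulrBl Aa_diff.
Qed.

Lemma RH t n : forall a b,
  \sum_(k < n.+1) Aa t k a * Aa t (n - k) b = Aa t n (a + b).
Proof.
elim: n => [|n IH] a b.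
  by rewrite big_ord1 /= mulr1.
suff : RHF t n.+1 b a = 0 by move/eqP; rewrite subr_eq0 => /eqP.
apply: polyF_zero a.
  apply: (@polyF_add (fun a => \sum_(k < n.+2) Aa t k a * Aa t (n.+1 - k) b)
            (fun a => - Aa t n.+1 (a + b))).
    apply: (@polyF_sum n.+2 (fun k a => Aa t k a * Aa t (n.+1 - k) b)) => k.
    exact: (polyF_mul (polyF_Aa t k) (polyF_const _)).
  exact: (polyF_opp (polyF_shift b (polyF_Aa t n.+1))).
elim=> [|i IHi].
  rewrite /RHF big_ord_recl big1 => [|k _]; last by rewrite Aa0 /= mul0r.
  by rewrite /= subn0 add0r addr0 mul1r subrr.
have := RHF_step t n b i%:R.
rewrite IHi subr0 -natr1 => ->.
rewrite /RHF IH subrr //.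
Qed.


Definition tt (l : nat) : rat := (l%:R + 1) / 2.
Definition P (l : nat) (a : rat) (n : nat) : rat := 4 ^+ n * Aa (tt l) n (- a / 2).

Lemma Pconv l a b n : \sum_(k < n.+1) P l a k * P l b (n - k) = P l (a + b) n.
Proof.
rewrite /P (_ : - (a + b) / 2 = - a / 2 + - b / 2); last by field.
rewrite -RH mulr_sumr; apply: eq_bigr => k _.
have hk : (k <= n)%N by rewrite -ltnS.
have -> : (4:rat) ^+ n = 4 ^+ k * 4 ^+ (n - k) by rewrite -exprD subnKC.
ring.
Qed.

Lemma P0 l n : P l 0 n = (n == 0%N)%:R.
Proof. by rewrite /P oppr0 mul0r Aa0; case: n => [|n] //=; rewrite mulr0. Qed.

Lemma Pat0 l a : P l a 0 = 1.
Proof. by rewrite /P expr0 mul1r. Qed.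

Lemma Pdiff l n : P l (l%:R - 1) n - P l (l%:R + 1) n = 4 * (n == 1%N)%:R.
Proof.
case: n => [|n]; first by rewrite !Pat0 subrr mulr0.
rewrite /P -mulrBr.
rewrite (_ : - (l%:R - 1) / 2 = (- (l%:R + 1) / 2) + 1); last by field.
rewrite Aa_diff (_ : - (l%:R + 1) / 2 + tt l = 0); last by rewrite /tt; field; done.
rewrite Aa0; case: n => [|n] /=; first by rewrite expr1 mulr1.
by rewrite !mulr0.
Qed.

Definition kk (i : nat) : nat := (i.+1 %/ 2)%N.
Definition X (l i : nat) (n : nat) : rat := (P l ((kk i)%:R - 1) n - P l (kk i)%:R n) / 2.
Definition G (l i : nat) (q : nat) : rat :=
  \sum_(j <- iota 1 (2 * l) | Cmat (2 * l) i j) X l j q.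
Definition H (l i : nat) (q : nat) : rat :=
  (P l (l%:R - (kk i)%:R) q + P l (l%:R + 1 - (kk i)%:R) q) / 2.

Lemma kk_odd p : kk (2 * p + 1) = p.+1.
Proof. rewrite /kk; lia. Qed.
Lemma kk_even p : kk (2 * p + 2) = p.+1.
Proof. rewrite /kk; lia. Qed.

Lemma Xpair l p q : X l (2 * p + 1) q = (P l p%:R q - P l p.+1%:R q) / 2.
Proof. by rewrite /X kk_odd -natr1 addrK. Qed.
Lemma Xpair2 l p q : X l (2 * p + 2) q = (P l p%:R q - P l p.+1%:R q) / 2.
Proof. by rewrite /X kk_even -natr1 addrK. Qed.

Lemma sumX l p q : \sum_(j <- iota 1 (2 * p)) X l j q = P l 0 q - P l p%:R q.
Proof.
elim: p => [|p IH]; first by rewrite muln0 big_nil subrr.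
rewrite mulnS addnC iotaD big_cat IH /= !big_cons big_nil.
rewrite (_ : (1 + 2 * p)%N = 2 * p + 1)%N; last by lia.
rewrite (_ : (2 * p + 1).+1 = 2 * p + 2)%N; last by lia.
rewrite Xpair Xpair2 -natr1. field; done.
Qed.

Lemma big_filter_true (s : seq nat) (Q : pred nat) (F : nat -> rat) :
  {in s, forall j, Q j} -> \sum_(j <- s | Q j) F j = \sum_(j <- s) F j.
Proof.
move=> h; rewrite big_seq_cond [RHS]big_seq; apply: eq_bigl => j /=.
by case: (boolP (j \in s)) => //= js; rewrite h.
Qed.

Lemma big_filter_false (s : seq nat) (Q : pred nat) (F : nat -> rat) :
  {in s, forall j, ~~ Q j} -> \sum_(j <- s | Q j) F j = 0.
Proof.
move=> h; rewrite big_seq_cond big1 // => j /andP [js qj].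
by move: (h j js); rewrite qj.
Qed.

Lemma Gform l i q : (1 <= i <= 2 * l)%N ->
  G l i q = P l 0 q - H l i q.
Proof.
move=> /andP [i1 i2].
have [k' hk] : exists k', (i = 2 * k' + 1)%N \/ (i = 2 * k' + 2)%N.
  exists ((i - 1) %/ 2)%N; lia.
have kl : (k' < l)%N by lia.
pose d := (l - k'.+1)%N.
have ld : l = (d + k'.+1)%N by rewrite /d; lia.
have kki : kk i = k'.+1 by case: hk => ->; rewrite ?kk_odd ?kk_even.
have E : iota 1 (2 * l) = iota 1 (2 * d) ++ [:: (2 * d + 1)%N; (2 * d + 2)%N] ++ iota (2 * d + 3) (2 * k')%N.
  rewrite (_ : (2 * l) = 2 * d + (2 + 2 * k'))%N; last by lia.
  rewrite iotaD; congr (_ ++ _).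
  rewrite (iotaD (1 + 2 * d) 2).
  have -> : (1 + 2 * d + 2 = 2 * d + 3)%N by lia.
  have -> : (1 + 2 * d = 2 * d + 1)%N by lia.
  rewrite /=; congr (_ :: _ :: _); lia.
rewrite /G /H E !big_cat /=.
rewrite big_filter_true; last first.
  move=> j; rewrite mem_iota => hj; rewrite /Cmat.
  case: hk => hi; subst i.
    have -> : (2 * k' + 1 + j == 2 * l)%N = false by apply/eqP; lia.
    by rewrite andbT; lia.
  rewrite oddD oddM /= andbF andbT; lia.
rewrite sumX.
rewrite (big_filter_false (s := iota _ _)); last first.
  move=> j; rewrite mem_iota => hj; rewrite /Cmat.
  have -> : (i + j <= (2 * l).+1)%N = false by apply/negbTE; rewrite -ltnNge; lia.
  by [].
rewrite !big_cons big_nil kki.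
rewrite (_ : l%:R - k'.+1%:R = d%:R :> rat); last by rewrite ld natrD; ring.
rewrite (_ : l%:R + 1 - k'.+1%:R = d.+1%:R :> rat); last by rewrite ld -natr1 natrD; ring.
rewrite Xpair Xpair2.
have o1 : odd (2 * k' + 1) by rewrite oddD oddM.
have o2 : odd (2 * d + 1) by rewrite oddD oddM.
have o3 : odd (2 * k' + 2) = false by rewrite oddD oddM.
have o4 : odd (2 * d + 2) = false by rewrite oddD oddM.
case: hk => hi; subst i; rewrite /Cmat ?o1 ?o2 ?o3 ?o4 /=.
- have -> : (2 * k' + 1 + (2 * d + 2) <= (2 * l).+1)%N by lia.
  have -> : (2 * k' + 1 + (2 * d + 1) == 2 * l)%N by apply/eqP; lia.
  rewrite /= addr0 ?andbF /= addr0; field; done.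
- rewrite !andbF /=.
  have -> : (2 * k' + 2 + (2 * d + 1) <= (2 * l).+1)%N by lia.
  have -> : (2 * k' + 2 + (2 * d + 2) <= (2 * l).+1)%N = false by apply/negbTE; rewrite -ltnNge; lia.
  rewrite /= !addr0; field; done.
Qed.

Lemma Hconv l i n :
  \sum_(p < n.+1) X l i p * H l i (n - p) = (n == 1%N)%:R.
Proof.
rewrite /X /H; set k := (kk i)%:R.
pose a := k - 1; pose b := k; pose c := l%:R - k; pose d := l%:R + 1 - k.
rewrite (eq_bigr (fun p : 'I_n.+1 =>
   (P l a p * P l c (n - p) + P l a p * P l d (n - p)
    - P l b p * P l c (n - p) - P l b p * P l d (n - p)) / 4)); last first.
  by move=> p _; rewrite /a /b /c /d; field; done.
rewrite -mulr_suml !sumrB !big_split /= !Pconv.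
rewrite (_ : a + c = l%:R - 1); last by rewrite /a /c; ring.
rewrite (_ : a + d = l%:R); last by rewrite /a /d; ring.
rewrite (_ : b + c = l%:R); last by rewrite /b /c; ring.
rewrite (_ : b + d = l%:R + 1); last by rewrite /b /d; ring.
rewrite (_ : P l (l%:R - 1) n + P l l%:R n - P l l%:R n - P l (l%:R + 1) n
           = P l (l%:R - 1) n - P l (l%:R + 1) n); last by ring.
rewrite Pdiff; field; done.
Qed.

Lemma X0 l i : X l i 0 = 0.
Proof. by rewrite /X !Pat0 subrr mul0r. Qed.

Lemma Xrec l i n : (1 <= i <= 2 * l)%N -> (0 < n)%N ->
  X l i n.+1 = \sum_(p < n) G l i (n - p) * X l i p.+1.
Proof.
move=> hi n0.
have := Hconv l i n.+1.
rewrite big_ord_recl X0 mul0r add0r.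
have -> : (n.+1 == 1%N) = false by case: n n0.
rewrite big_ord_recr /= /bump leq0n add1n subnn.
have -> : H l i 0 = 1 by rewrite /H !Pat0; field; done.
rewrite mulr1 => /eqP; rewrite addrC addr_eq0 => /eqP ->.
rewrite -sumrN; apply: eq_bigr => p _.
rewrite /bump leq0n add1n subSS.
have hp : (0 < n - p)%N by rewrite subn_gt0.
have := Gform (n - p) hi; rewrite P0 => ->.
by case: (n - p)%N hp => // m _; rewrite /= sub0r mulNr mulrC.
Qed.

Lemma Xtotal l n : (0 < n)%N ->
  \sum_(i <- iota 1 (2 * l)) X l i n = - P l l%:R n.
Proof.
by move=> n0; rewrite sumX P0; case: n n0 => // n _; rewrite sub0r.
Qed.

Local Close Scope ring_scope.

Definition fvalid m (A : nat -> nat -> bool) i (f : seq ctree) :=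
  all (fun u => A i (ccolor u) && cvalid m A u) f.
Definition fsize (f : seq ctree) := sumn (map csize f).

Definition pairsL m (A : nat -> nat -> bool) i n : seq (nat * nat) :=
  [seq (p, j) | p <- iota 0 n, j <- [seq j <- iota 1 m | A i j]].

Fixpoint forests m (A : nat -> nat -> bool) (N : nat) (i n : nat) : seq (seq ctree) :=
  match N with
  | 0 => if n == 0 then [:: [::]] else [::]
  | N'.+1 => if n == 0 then [:: [::]] else
     [seq CNode x.2 y.1 :: y.2 | x <- pairsL m A i n,
        y <- [seq (f1, f2) | f1 <- forests m A N' x.2 (n - x.1).-1,
                             f2 <- forests m A N' i x.1]]
  end.

Lemma csize_gt0 t : (0 < csize t)%N.
Proof. by case: t. Qed.

Lemma fsize0 f : fsize f = 0 -> f = [::].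
Proof. by case: f => // u f; rewrite /fsize /=; have := csize_gt0 u; lia. Qed.

Lemma forests_sound m A N i n f :
  f \in forests m A N i n -> fvalid m A i f && (fsize f == n).
Proof.
elim: N i n f => [|N IH] i n f /=.
  by case: ifP => // /eqP -> ; rewrite inE => /eqP ->.
case: ifP => [/eqP -> | n0]; first by rewrite inE => /eqP ->.
case/allpairsPdep => [[p j] [[f1 f2] [/allpairsP [[p' j'] /= [hp hj [-> ->]]]]]].
move=> /allpairsP [[g1 g2] /= [h1 h2 [-> ->]]] ->.
move: hj; rewrite mem_filter mem_iota => /andP [Aij hj].
move: hp; rewrite mem_iota => hp.
move/andP: (IH _ _ _ h1) => [v1 /eqP s1].
move/andP: (IH _ _ _ h2) => [v2 /eqP s2].
rewrite /fvalid /= Aij /= -/(fvalid m A j' g1) v1 -/(fvalid m A i g2) v2 andbT.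
apply/andP; split; first by lia.
rewrite /fsize /= -/(fsize g1) -/(fsize g2) s1 s2.
move/negbT: n0; lia.
Qed.

Lemma forests_complete m A N i n f : (n <= N)%N ->
  fvalid m A i f -> fsize f = n -> f \in forests m A N i n.
Proof.
elim: N i n f => [|N IH] i n f hn hv hs /=.
  have n0 : n = 0 by lia.
  by rewrite n0 /= inE (fsize0 (etrans hs n0)).
case: ifP => [/eqP n0 | n0]; first by rewrite inE (fsize0 (etrans hs n0)).
case: f hv hs => [|[j f1] f2] hv hs; first by move: n0; rewrite -hs.
move: hv; rewrite /fvalid /= => /andP [/andP [Aij /andP [hj v1]] v2].
rewrite /fsize /= -/(fsize f1) -/(fsize f2) in hs.
apply/allpairsPdep; exists (fsize f2, j), (f1, f2); split => //=.
- apply/allpairsP; exists (fsize f2, j) => /=; split => //.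
    by rewrite mem_iota; lia.
  by rewrite mem_filter Aij mem_iota; lia.
- apply/allpairsP; exists (f1, f2) => /=; split => //.
    by apply: IH => //; lia.
  by apply: IH => //; lia.
Qed.

Lemma forests_uniq m A N i n : uniq (forests m A N i n).
Proof.
elim: N i n => [|N IH] i n /=; first by case: ifP.
case: ifP => // n0.
apply: allpairs_uniq_dep.
- rewrite /pairsL; apply: allpairs_uniq; first exact: iota_uniq.
    by rewrite filter_uniq // iota_uniq.
  by move=> [a b] [c d] _ _ /= [-> ->].
- move=> x _; apply: allpairs_uniq => //.
  by move=> [a b] [c d] _ _ /= [-> ->].
- move=> [[p j] [f1 f2]] [[p' j'] [g1 g2]] h1 h2 /= [ej ef1 ef2].
  have e1 : fsize f2 = p.
    move: h1 => /allpairsPdep [x [y [_ hy e]]].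
    have ex := congr1 tag e; have ey := congr1 (fun u => (projT2 u : seq ctree * seq ctree)) e.
    simpl in ex, ey; subst x y.
    move: hy => /allpairsP [[c d] /= [_ hd [_ ->]]].
    by move/andP: (forests_sound hd) => [_ /eqP].
  have e2 : fsize g2 = p'.
    move: h2 => /allpairsPdep [x [y [_ hy e]]].
    have ex := congr1 tag e; have ey := congr1 (fun u => (projT2 u : seq ctree * seq ctree)) e.
    simpl in ex, ey; subst x y.
    move: hy => /allpairsP [[c d] /= [_ hd [_ ->]]].
    by move/andP: (forests_sound hd) => [_ /eqP].
  by subst.
Qed.

Lemma forests_size0 m A N i : size (forests m A N i 0) = 1.
Proof. by case: N. Qed.

Lemma forests_size m A N i n : (0 < n)%N ->
  size (forests m A N.+1 i n) =
  \sum_(p < n) \sum_(j <- iota 1 m | A i j)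
     size (forests m A N j (n - p).-1) * size (forests m A N i p).
Proof.
move=> n0 /=; rewrite (negbTE (lt0n_neq0 n0)).
rewrite size_allpairs_dep sumnE big_map /pairsL big_allpairs_dep /=.
rewrite -(big_mkord xpredT (fun p => \sum_(j <- iota 1 m | A i j)
     size (forests m A N j (n - p).-1) * size (forests m A N i p))).
rewrite /index_iota subn0; apply: eq_bigr => p _.
rewrite big_filter; apply: eq_bigr => j _.
by rewrite size_allpairs.
Qed.

Local Open Scope ring_scope.

Lemma X1 l i : X l i 1 = 1.
Proof.
rewrite /X /P /Aa /binomr !big_ord0 /= fact0 expr1; field; done.
Qed.

Lemma count_eq l n : forall N i, (n <= N)%N -> (1 <= i <= 2 * l)%N ->
  (size (forests (2 * l) (Cmat (2 * l)) N i n))%:R = X l i n.+1.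
Proof.
elim/ltn_ind: n => n IH N i hN hi.
case: (posnP n) => [->|n0]; first by rewrite forests_size0 X1.
case: N hN => [|N] hN; first by lia.
rewrite forests_size // natr_sum (Xrec hi n0); apply: eq_bigr => p _.
rewrite natr_sum /G mulr_suml big_seq_cond [RHS]big_seq_cond.
apply: eq_bigr => j /andP [hj _]; move: hj; rewrite mem_iota => hj.
have hp : (p < n)%N by [].
rewrite natrM IH; last by lia. 2: by lia. 2: by lia.
rewrite IH; last by lia. 2: by lia. 2: by lia.
by rewrite prednK //; lia.
Qed.

Definition tlist m A n := [seq CNode i f | i <- iota 1 m, f <- forests m A n.-1 i n.-1].

Lemma tlist_is m A n : (0 < n)%N -> is_tA m A n (size (tlist m A n)).
Proof.
move=> n0; exists (tlist m A n); split => //.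
- apply: allpairs_uniq_dep; first exact: iota_uniq.
    by move=> x _; exact: forests_uniq.
  by move=> [i f] [i' f'] _ _ /= [-> ->].
- case=> c cs; apply/allpairsPdep/idP.
    move=> [i [f [hi hf [-> ->]]]].
    move/andP: (forests_sound hf) => [v /eqP s].
    move: hi; rewrite mem_iota /= => hi.
    rewrite -/(fvalid m A i f) v andbT -/(fsize f) s.
    apply/andP; split; lia.
  rewrite /= -/(fvalid m A c cs) -/(fsize cs) => /andP [/andP [hc v] /eqP s].
  exists c, cs; split => //.
    by rewrite mem_iota; lia.
  by apply: forests_complete => //; lia.
Qed.

Theorem theorem38 (l n : nat) (hl : (0 < l)%N) (hn : (0 < n)%N) :
  exists N : nat, is_tA (2 * l) (Cmat (2 * l)) n N /\
    N%:R = (l%:R / n%:R) * 2 ^+ (2 * n).-1 *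
           binomr ((l%:R + 1) / 2 * n%:R - l%:R / 2 - 1) n.-1 :> rat.
Proof.
exists (size (tlist (2 * l) (Cmat (2 * l)) n)); split; first exact: tlist_is.
rewrite /tlist size_allpairs_dep sumnE big_map natr_sum.
rewrite big_seq (eq_bigr (fun i => X l i n)); last first.
  move=> i; rewrite mem_iota => hi.
  by rewrite count_eq ?prednK //; lia.
rewrite -big_seq Xtotal // /P.
case: n hn => // n _.
rewrite /Aa /tt.
rewrite (_ : - l%:R / 2 + (l%:R + 1) / 2 * n.+1%:R - 1 =
             (l%:R + 1) / 2 * n.+1%:R - l%:R / 2 - 1); last by ring.
rewrite (_ : (2 * n.+1).-1 = (2 * n).+1)%N; last by lia.
have e4 : (4:rat) ^+ n.+1 = 2 ^+ (2 * n).+1 * 2.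
  rewrite -exprSr (_ : (2 * n).+2 = 2 * n.+1)%N; last by lia.
  by rewrite exprM; congr (_ ^+ _); rewrite expr2 -natrM.
rewrite e4 /=.
have h : n.+1%:R != 0 :> rat by rewrite pnatr_eq0.
field; by rewrite nat1r.
Qed.
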